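(* Let $\mathcal{A}$ be a pOC with state set $Q$ and let $p,q\in Q$. If $\mathrm{Pre}^*(q(0))\cap\mathrm{Post}^*(p(1))$ is finite, then $$|\mathrm{Pre}^*(q(0))\cap\mathrm{Post}^*(p(1))|\le|Q|^2\cdot(|Q|+2).$$
   Context: A pOC is $\mathcal{A}=(Q,\delta^{=0},\delta^{>0},P^{=0},P^{>0})$ with the following components. - $\delta^{>0}\subseteq Q\times\{-1,0,1\}\times Q$ are the positive rules and $\delta^{=0}\subseteq Q\times\{0,1\}\times Q$ are the zero rules. Every state has both kinds of outgoing rule. - $P^{>0}$ and $P^{=0}$ are positive probability distributions over the outgoing rules of each state. The Markov chain $\mathcal{M}_\mathcal{A}$ on configurations $p(i)\in Q\times\mathbb{N}_0$ has the following transitions: - $p(0)\to q(c)$ iff $(p,c,q)\in\delta^{=0}$; - for $i\ge1$, $p(i)\to q(i+c)$ iff $(p,c,q)\in\delta^{>0}$. $\mathrm{Pre}^*(C)$ is the set of configurations from which $C$ is reachable in $\mathcal{M}_\mathcal{A}$. $\mathrm{Post}^*(C)$ is the set of configurations reachable from $C$. *)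

(* Defs.v *)
From mathcomp Require Import all_boot all_order all_algebra.
From Stdlib Require Import Relations.
Set Implicit Arguments. Unset Strict Implicit. Unset Printing Implicit Defensive.
Import GRing.Theory Num.Theory.

(* A probabilistic one-counter automaton (pOC).  Rules are triples (p,c,q)
   with c an integer counter update; they are given as boolean predicates. *)
Record pOC (Q : finType) := POC {
  zero_rule : Q -> int -> Q -> bool;
  pos_rule  : Q -> int -> Q -> bool;
  zero_prob : Q -> int -> Q -> rat;
  pos_prob  : Q -> int -> Q -> rat
}.

Definition updates_pos : seq int := [:: (-1)%R; 0%R; 1%R].
Definition updates_zero : seq int := [:: 0%R; 1%R].

Definition wf_pOC (Q : finType) (A : pOC Q) : Prop :=
  (forall p c q, pos_rule A p c q -> c \in updates_pos) /\
  (forall p c q, zero_rule A p c q -> c \in updates_zero) /\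
  (forall p, exists c q, pos_rule A p c q) /\
  (forall p, exists c q, zero_rule A p c q) /\
  (forall p c q, pos_rule A p c q -> 0 < pos_prob A p c q)%R /\
  (forall p, \sum_(c <- updates_pos) \sum_(q : Q | pos_rule A p c q)
                 pos_prob A p c q = 1)%R /\
  (forall p c q, zero_rule A p c q -> 0 < zero_prob A p c q)%R /\
  (forall p, \sum_(c <- updates_zero) \sum_(q : Q | zero_rule A p c q)
                 zero_prob A p c q = 1)%R.

Definition config (Q : finType) := (Q * nat)%type.

Definition step (Q : finType) (A : pOC Q) (x y : config Q) : Prop :=
  let: (p, i) := x in let: (q, j) := y in
  if i == 0%N then exists c : int, zero_rule A p c q /\ (j%:Z = c)%R
  else exists c : int, pos_rule A p c q /\ (j%:Z = i%:Z + c)%R.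

Definition reach (Q : finType) (A : pOC Q) : relation (config Q) :=
  clos_refl_trans (config Q) (step A).

Definition PrePost (Q : finType) (A : pOC Q) (p q : Q) (x : config Q) : Prop :=
  reach A x (q, 0%N) /\ reach A (p, 1%N) x.

Definition finite_card (Q : finType) (S : config Q -> Prop) (n : nat) : Prop :=
  exists s : seq (config Q), uniq s /\ (forall x, x \in s <-> S x) /\ size s = n.

(* Main.v *)
Require Import Defs.
From mathcomp Require Import all_boot all_order all_algebra.
From mathcomp Require Import zify.
From Stdlib Require Import Relations.
Import GRing.Theory Num.Theory.

Section S.
Variables (Q : finType) (A : pOC Q).
Hypothesis wf : wf_pOC A.

Lemma step_cases a i b j : step A (a, i) (b, j) ->
  (i = 0 /\ j <= 1) \/ (0 < i /\ j <= i.+1 /\ i <= j.+1).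
Proof.
case: wf => [Hp [Hz _]].
rewrite /step; case: eqP => [->|Hi] [c [Hr Hc]].
- left; split => //.
  move: (Hz _ _ _ Hr); rewrite !inE => /orP[] /eqP Ec; subst c; lia.
- right; move: (Hp _ _ _ Hr); rewrite !inE => /orP[/eqP Ec|/orP[] /eqP Ec]; subst c; lia.
Qed.

Arguments step_cases {a i b j}.

Definition pstep (x y : config Q) := step A x y /\ 0 < x.2.
Definition preach := clos_refl_trans (config Q) pstep.

Lemma pstep_shift m x y : pstep x y -> pstep (x.1, x.2 + m) (y.1, y.2 + m).
Proof.
case: x y => [a i] [b j] [] /=; rewrite /step.
case: eqP => [->//|Hi] [c [Hr Hc]] Hi0; split => /=; last lia.
have -> : (i + m == 0) = false by apply/eqP; lia.
exists c; split => //. lia.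
Qed.

Lemma preach_shift m x y : preach x y -> preach (x.1, x.2 + m) (y.1, y.2 + m).
Proof.
elim => [x0 y0 H|x0|x0 y0 z0 _ H1 _ H2].
- by apply: rt_step; apply: pstep_shift.
- exact: rt_refl.
- exact: rt_trans H1 H2.
Qed.

Lemma preach_reach x y : preach x y -> reach A x y.
Proof.
elim => [x0 y0 [H _]|x0|x0 y0 z0 _ H1 _ H2].
- exact: rt_step.
- exact: rt_refl.
- exact: rt_trans H1 H2.
Qed.


Lemma up_chain (f : nat -> Q) k :
  (forall l, 0 < l -> l < k -> preach (f l, l) (f l.+1, l.+1)) ->
  forall a b, 0 < a -> a <= b -> b <= k -> preach (f a, a) (f b, b).
Proof.
move=> H a; elim => [|b IH] Ha Hab Hb; first lia.
case: (ltnP a b.+1) => Hab'.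
- apply: rt_trans (IH Ha _ _) (H _ _ _); lia.
- have -> : b.+1 = a by lia. exact: rt_refl.
Qed.

Lemma down_chain (g : nat -> Q) k :
  (forall l, l < k -> preach (g l.+1, l.+1) (g l, l)) ->
  forall a b, a <= b -> b <= k -> preach (g b, b) (g a, a).
Proof.
move=> H a; elim => [|b IH] Hab Hb.
- have -> : a = 0 by lia. exact: rt_refl.
case: (ltnP a b.+1) => Hab'.
- apply: rt_trans (H _ _) (IH _ _); lia.
- have -> : b.+1 = a by lia. exact: rt_refl.
Qed.

Arguments up_chain {f k}.
Arguments down_chain {g k}.

Lemma up_dec p x : reach A (p, 1) x -> 0 < x.2 ->
  exists f : nat -> Q, reach A (p, 1) (f 1, 1) /\
    (forall l, 0 < l -> l < x.2 -> preach (f l, l) (f l.+1, l.+1)) /\ f x.2 = x.1.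
Proof.
move=> H0; elim: (clos_rt_rtn1 _ _ _ _ H0) => [|[b i] [c j] Hyz Hpath IH] /= Hx.
  by exists (fun _ => p); split; [exact: rt_refl|split=> // l; lia].
have Rz : reach A (p, 1) (c, j) by apply: rt_trans (clos_rtn1_rt _ _ _ _ Hpath) (rt_step _ _ _ _ Hyz).
case: (step_cases Hyz) => [[Hi Hj]|[Hi [Hj1 Hj2]]].
  exists (fun _ => c); split; first by move: Rz; have -> : j = 1 by lia.
  by split => // l; lia.
case: (IH Hi) => f [R1 [Hch Hfi]] /=; simpl in Hch, Hfi.
exists (fun l => if l == j then c else f l); split; [|split].
- case: eqP => [Ej|_]; [by move: Rz; rewrite -Ej|exact: R1].
- move=> l Hl Hlj.
  have -> : (l == j) = false by apply/eqP; lia.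
  case: (eqVneq l.+1 j) => [El|Nl].
  + apply: (rt_trans _ _ _ (b, i)).
      rewrite -Hfi; apply: (up_chain Hch l i); lia.
    by apply: rt_step; rewrite El; split.
  + apply: Hch => //; lia.
- by rewrite eqxx.
Qed.

Lemma down_dec q x : reach A x (q, 0) ->
  exists g : nat -> Q, reach A (g 0, 0) (q, 0) /\
    (forall l, l < x.2 -> preach (g l.+1, l.+1) (g l, l)) /\ g x.2 = x.1.
Proof.
move=> H0; have := clos_rt_rt1n _ _ _ _ H0; move Ez: (q, 0) => z Hz.
elim: Hz Ez => [x0|[a i] [b j] z0 Hxy Hpath IH] Ez /=.
  by subst x0; exists (fun _ => q); split; [exact: rt_refl|split=> // l; lia].
subst z0.
have Rx : reach A (a, i) (q, 0) by apply: rt_trans (rt_step _ _ _ _ Hxy) (clos_rt1n_rt _ _ _ _ Hpath).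
case: (step_cases Hxy) => [[Hi Hj]|[Hi [Hj1 Hj2]]].
  by exists (fun _ => a); split; [move: Rx; rewrite Hi|split=> // l; lia].
case: (IH erefl) => g [R0 [Hch Hgj]] /=; simpl in Hch, Hgj.
exists (fun l => if l == i then a else g l); split; [|split].
- have -> : (0 == i) = false by apply/eqP; lia. exact: R0.
- move=> l Hl.
  have -> : (l == i) = false by apply/eqP; lia.
  case: (eqVneq l.+1 i) => [El|Nl].
  + rewrite El; apply: (rt_trans _ _ _ (b, j)); first by apply: rt_step; split.
    rewrite -Hgj; apply: (down_chain Hch) => //; lia.
  + apply: Hch; lia.
- by rewrite eqxx.
Qed.

End S.

Arguments up_chain {Q A f k}.
Arguments down_chain {Q A g k}.
Arguments preach_shift {Q A} m {x y}.
Arguments preach_reach {Q A x y}.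
Arguments up_dec {Q A} wf {p x}.
Arguments down_dec {Q A} wf {q x}.

Lemma up_pump (Q : finType) (A : pOC Q) p r k (f : nat -> Q) a b :
  reach A (p, 1) (f 1, 1) ->
  (forall l, 0 < l -> l < k -> preach Q A (f l, l) (f l.+1, l.+1)) ->
  f k = r -> 0 < a -> a < b -> b <= k -> f a = f b ->
  forall m, reach A (p, 1) (r, k + m * (b - a)).
Proof.
move=> R1 Hch Hfk Ha Hab Hb Ef m.
set s := f a; set d := b - a.
have Hsb : preach Q A (s, a) (s, a + d).
  have -> : a + d = b by rewrite /d; lia.
  rewrite {2}/s Ef; apply: (up_chain Hch) => //; lia.
have Hit : forall m, preach Q A (s, a) (s, a + m * d).
  elim => [|m' IH]; first by rewrite mul0n addn0; exact: rt_refl.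
  apply: rt_trans IH _.
  have -> : a + m'.+1 * d = a + d + m' * d by lia.
  exact: (preach_shift (m' * d) Hsb).
have Hsk : preach Q A (s, a) (r, k).
  rewrite -Hfk; apply: (up_chain Hch) => //; lia.
apply: rt_trans (rt_trans _ _ _ _ _ R1 (preach_reach (up_chain Hch 1 a _ _ _))) _ => //; try lia.
apply: preach_reach; apply: rt_trans (Hit m) _.
exact: (preach_shift (m * d) Hsk).
Qed.

Lemma down_pump (Q : finType) (A : pOC Q) q r k (g : nat -> Q) a b :
  reach A (g 0, 0) (q, 0) ->
  (forall l, l < k -> preach Q A (g l.+1, l.+1) (g l, l)) ->
  g k = r -> a < b -> b <= k -> g a = g b ->
  forall m, reach A (r, k + m * (b - a)) (q, 0).
Proof.
move=> R0 Hch Hgk Hab Hb Eg m.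
set s := g a; set d := b - a.
have Hsb : preach Q A (s, a + d) (s, a).
  have -> : a + d = b by rewrite /d; lia.
  rewrite {1}/s Eg; apply: (down_chain Hch) => //; lia.
have Hit : forall m, preach Q A (s, a + m * d) (s, a).
  elim => [|m' IH]; first by rewrite mul0n addn0; exact: rt_refl.
  apply: rt_trans _ IH.
  have -> : a + m'.+1 * d = a + d + m' * d by lia.
  exact: (preach_shift (m' * d) Hsb).
have Hks : preach Q A (r, k) (s, a).
  rewrite -Hgk; apply: (down_chain Hch) => //; lia.
apply: rt_trans _ (rt_trans _ _ _ _ _ (preach_reach (down_chain Hch 0 a _ _)) R0); try lia.
apply: preach_reach; apply: rt_trans (preach_shift (m * d) Hks) _.
exact: Hit.
Qed.

Lemma pigeon (Q : finType) (h : nat -> Q) base :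
  exists a b, base <= a /\ a < b /\ b <= base + #|Q| /\ h a = h b.
Proof.
pose F := fun i : 'I_(#|Q|.+1) => h (base + i).
have : ~~ injectiveb F.
  apply/negP => /injectiveP Hi; have := @leq_card _ _ F Hi; rewrite card_ord; lia.
case/injectivePn => i [j] Hij EF.
have Hi := ltn_ord i; have Hj := ltn_ord j.
case: (ltngtP i j) => H.
- by exists (base + i), (base + j); rewrite /F in EF; split; [lia|split; [lia|split; [lia|]]].
- by exists (base + j), (base + i); rewrite /F in EF; split; [lia|split; [lia|split; [lia|]]].
- by move/val_inj: H => H; rewrite H eqxx in Hij.
Qed.

Theorem mainTheorem6 (Q : finType) (A : pOC Q) (p q : Q) (n : nat) :
  wf_pOC A ->
  finite_card (PrePost A p q) n ->
  (n <= #|Q| ^ 2 * (#|Q| + 2))%N.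
Proof.
move=> wf [s [Us [Hs Hsz]]].
have Hbound : forall x, PrePost A p q x -> x.2 < #|Q|.+2.
  move=> [r k] [Rd Ru] /=; rewrite ltnNge; apply/negP => Hk.
  have Hk0 : 0 < k by lia.
  case: (up_dec wf Ru Hk0) => f [R1 [Hch Hfk]] /=; simpl in Hch, Hfk.
  case: (down_dec wf Rd) => g [R0 [Hgch Hgk]]; simpl in Hgch, Hgk.
  case: (pigeon _ f 1) => a1 [b1 [H1 [H2 [H3 Ef]]]].
  case: (pigeon _ g 0) => a2 [b2 [H1' [H2' [H3' Eg]]]].
  have Hin : forall m, PrePost A p q (r, k + m * ((b1 - a1) * (b2 - a2))).
    move=> m; split.
    + have Hb2 : b2 <= k by apply: (leq_trans H3'); apply: (leq_trans (leqnSn _)); exact: ltnW.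
      have := down_pump _ _ _ _ _ _ _ _ R0 Hgch Hgk H2' Hb2 Eg (m * (b1 - a1)).
      by rewrite mulnAC -mulnA [(b2 - a2) * _]mulnC.
    + have Hb1 : b1 <= k by apply: (leq_trans H3); rewrite add1n; exact: ltnW.
      have := up_pump _ _ _ _ _ _ _ _ R1 Hch Hfk H1 H2 Hb1 Ef (m * (b2 - a2)).
      by rewrite -mulnA [(b2 - a2) * _]mulnC.
  pose M := \max_(y <- s) y.2.
  have Hm := (Hs (r, k + M.+1 * ((b1 - a1) * (b2 - a2)))).2 (Hin _).
  have := leq_bigmax_seq (F := snd) (P := predT) _ Hm isT.
  rewrite /= -/M => HM.
  have Hd : 0 < (b1 - a1) * (b2 - a2) by rewrite muln_gt0 !subn_gt0 H2 H2'.
  move: HM; set d := (b1 - a1) * (b2 - a2) in Hd *; nia.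
pose N := #|Q|.+2.
have Hsize : size s <= size [seq (y.1, val y.2) | y <- enum {: Q * 'I_N}].
  apply: uniq_leq_size => // x Hx.
  have Hx2 : x.2 < N by apply: Hbound; apply/Hs.
  apply/mapP; exists (x.1, Ordinal Hx2); first by rewrite mem_enum.
  by case: x Hx Hx2.
rewrite size_map -cardE card_prod card_ord in Hsize.
rewrite -Hsz; apply: (leq_trans Hsize); rewrite /N.
case: #|Q| => [|c]; first by [].
nia.
Qed.
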